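(* Let $n\ge1$, let $\chi$ be an irreducible character of $S_n$, let $1\le k\le n$ and let $A,X^1,\ldots,X^k\in M_n(\mathbb{C})$. Then $$D^k d_\chi (A)(X^1,\ldots ,X^k)= \sum_{\sigma \in S_k}\sum _{\alpha, \beta \in Q_{k,n}}d_\chi \Big(X^\sigma_{\beta}[ \alpha | \beta ] \bigoplus_{\alpha | \beta}A(\alpha|\beta)\Big),$$ and in particular, for $X\in M_n(\mathbb{C})$, $$D^k d_\chi (A)(X,\ldots ,X)= k!\sum _{\alpha, \beta \in Q_{k,n}}d_\chi \Big(X [ \alpha | \beta ] \bigoplus_{\alpha |\beta}A(\alpha|\beta)\Big).$$
   Context: $d_\chi(Y)=\sum_{\sigma\in S_n}\chi(\sigma)\prod_{i=1}^n y_{i\sigma(i)}$ for $Y=(y_{ij})\in M_n(\mathbb{C})$. $D^k d_\chi(A)(X^1,\ldots,X^k)=\frac{\partial^k}{\partial t_1\cdots\partial t_k}\big|_{t_1=\cdots=t_k=0} d_\chi(A+t_1X^1+\cdots+t_kX^k)$. $Q_{k,n}$ is the set of strictly increasing maps $\{1,\ldots,k\}\to\{1,\ldots,n\}$; for $\alpha\in Q_{k,n}$, $\bar\alpha\in Q_{n-k,n}$ is the map whose image is the complement of $\operatorname{Im}\alpha$. For $\sigma\in S_k$ and $\beta\in Q_{k,n}$, $X^\sigma_\beta$ is the $n\times n$ matrix whose $\beta(p)$-th column equals the $\beta(p)$-th column of $X^{\sigma(p)}$ for $1\le p\le k$, all other columns being zero. For an $n\times n$ matrix $Y$, $Y[\alpha|\beta]$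 is the $k\times k$ matrix with $(i,j)$ entry $y_{\alpha(i)\beta(j)}$ and $Y(\alpha|\beta)$ is the $(n-k)\times(n-k)$ matrix obtained by deleting rows $\alpha(1),\ldots,\alpha(k)$ and columns $\beta(1),\ldots,\beta(k)$. For a $k\times k$ matrix $P$ and an $(n-k)\times(n-k)$ matrix $R$, $P\bigoplus_{\alpha|\beta}R=(z_{ij})$ is the $n\times n$ matrix with $z_{ij}=0$ if exactly one of $i\in\operatorname{Im}\alpha$, $j\in\operatorname{Im}\beta$ holds; $z_{ij}=p_{\alpha^{-1}(i)\beta^{-1}(j)}$ if $i\in\operatorname{Im}\alpha,\ j\in\operatorname{Im}\beta$; $z_{ij}=r_{\bar\alpha^{-1}(i)\bar\beta^{-1}(j)}$ if $i\notin\operatorname{Im}\alpha,\ j\notin\operatorname{Im}\beta$. *)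

(* Defs.v *)
From HB Require Import structures.
From mathcomp Require Import all_boot all_order all_algebra all_fingroup all_field.
From mathcomp Require Import all_character.
From mathcomp Require Import mpoly.
Set Implicit Arguments. Unset Strict Implicit. Unset Printing Implicit Defensive.
Import GRing.Theory.
Local Open Scope ring_scope.

Definition gmf_chi (R : comNzRingType) (n : nat) (c : 'S_n -> R) (Y : 'M[R]_n) : R :=
  \sum_(s : 'S_n) c s * \prod_(i < n) Y i (s i).

(* Q_{k,n}: strictly increasing maps {1..k} -> {1..n} (0-based ordinals). *)
Definition incr (k n : nat) (a : {ffun 'I_k -> 'I_n}) : bool :=
  [forall i : 'I_k, forall j : 'I_k, (i < j)%N ==> (a i < a j)%N].

(* abar : the increasing map 'I_(n-k) -> 'I_n whose image is the complement of
   Im a (the increasing enumeration of the complement). *)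
Definition compl_map (k n : nat) (a : {ffun 'I_k -> 'I_n}) (p : 'I_(n - k)) : 'I_n :=
  nth (widen_ord (leq_subr k n) p) (enum [set j : 'I_n | j \notin codom a]) p.

Definition submx_in (R : Type) (k n : nat) (Y : 'M[R]_n)
    (a b : {ffun 'I_k -> 'I_n}) : 'M[R]_k :=
  \matrix_(i < k, j < k) Y (a i) (b j).

Definition submx_out (R : Type) (k n : nat) (Y : 'M[R]_n)
    (a b : {ffun 'I_k -> 'I_n}) : 'M[R]_(n - k) :=
  \matrix_(i < n - k, j < n - k) Y (compl_map a i) (compl_map b j).

Definition dsum_ab (R : comNzRingType) (k n : nat) (a b : {ffun 'I_k -> 'I_n})
    (P : 'M[R]_k) (Q : 'M[R]_(n - k)) : 'M[R]_n :=
  \matrix_(i < n, j < n)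
    if [pick p | a p == i] is Some p then
      (if [pick q | b q == j] is Some q then P p q else 0)
    else
      (if [pick q | b q == j] is Some _ then 0
       else if [pick p | compl_map a p == i] is Some p then
              (if [pick q | compl_map b q == j] is Some q then Q p q else 0)
            else 0).

Definition Xsig (R : comNzRingType) (k n : nat) (X : 'I_k -> 'M[R]_n)
    (s : 'S_k) (b : {ffun 'I_k -> 'I_n}) : 'M[R]_n :=
  \matrix_(i < n, j < n)
    if [pick p | b p == j] is Some p then X (s p) i j else 0.

(* D^k d_c(A)(X^1,...,X^k): the mixed partial derivative d^k/dt_1...dt_k at t = 0 of the
   polynomial t |-> d_c(A + t_1 X^1 + ... + t_k X^k), computed formally in {mpoly R[k]}. *)
Definition Dk_dchi (R : comNzRingType) (n k : nat) (c : 'S_n -> R)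
    (A : 'M[R]_n) (X : 'I_k -> 'M[R]_n) : R :=
  let M : 'M[{mpoly R[k]}]_n :=
    \matrix_(i < n, j < n) ((A i j)%:MP + \sum_(p < k) 'X_p * (X p i j)%:MP) in
  let P := gmf_chi (fun s => (c s)%:MP) M in
  (foldr (fun p q => mderiv p q) P (enum 'I_k)).@[fun _ => 0].

(* Main.v *)
Require Import Defs.
From HB Require Import structures.
From mathcomp Require Import all_boot all_order all_algebra all_fingroup all_field.
From mathcomp Require Import all_character.
From mathcomp Require Import mpoly.
Set Implicit Arguments. Unset Strict Implicit. Unset Printing Implicit Defensive.
Import GRing.Theory.
Local Open Scope ring_scope.
Section Comb.
Variables (k n : nat).
Definition ltO (m : nat) := fun x y : 'I_m => (x < y)%N.

Lemma ltO_trans m : transitive (@ltO m).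
Proof. by move=> y x z; apply: ltn_trans. Qed.
Lemma ltO_irr m : irreflexive (@ltO m).
Proof. by move=> x; apply: ltnn. Qed.

Lemma enum_ord_sorted m : sorted (@ltO m) (enum 'I_m).
Proof. by have := iota_ltn_sorted 0 m; rewrite -val_enum_ord sorted_map. Qed.

Lemma incr_inj (a : {ffun 'I_k -> 'I_n}) : incr a -> injective a.
Proof.
move=> /forallP H i j eq; apply/ord_inj.
case: (ltngtP i j) => // h.
- by have := forallP (H i) j; rewrite h /= eq ltnn.
- by have := forallP (H j) i; rewrite h /= eq ltnn.
Qed.

Lemma incr_sorted (a : {ffun 'I_k -> 'I_n}) : incr a -> sorted (@ltO n) (codom a).
Proof.
move=> /forallP H; rewrite codomE sorted_map.
apply: sub_sorted (enum_ord_sorted k) => i j h.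
by have := forallP (H i) j; rewrite /ltO in h; rewrite h.
Qed.

Lemma incr_uniq (a b : {ffun 'I_k -> 'I_n}) : incr a -> incr b ->
  codom a =i codom b -> a = b.
Proof.
move=> ha hb e.
have := irr_sorted_eq (@ltO_trans n) (@ltO_irr n) (incr_sorted ha) (incr_sorted hb) e.
rewrite !codomE => E; apply/ffunP => p.
have hp : (index p (enum 'I_k) < size (enum 'I_k))%N by rewrite index_mem mem_enum.
have := congr1 (fun s => nth (a p) s (index p (enum 'I_k))) E.
by rewrite !(nth_map p) -?enumT // nth_index ?mem_enum.
Qed.

Lemma incr_exists (x0 : 'I_n) (S : {set 'I_n}) : #|S| = k ->
  exists2 a : {ffun 'I_k -> 'I_n}, incr a & codom a =i S.
Proof.
move=> hS; exists [ffun p : 'I_k => nth x0 (enum S) p].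
- have so : sorted (@ltO n) (enum S).
    rewrite /enum_mem -enumT; apply: sorted_filter; first exact: ltO_trans.
    exact: enum_ord_sorted.
  apply/forallP => i; apply/forallP => j; apply/implyP => h; rewrite !ffunE.
  apply: (sorted_ltn_nth (@ltO_trans n) x0 so) => //; rewrite inE -cardE hS.
  + exact: ltn_ord.
  + exact: ltn_ord.
- move=> y; apply/codomP/idP.
  + by case=> p ->; rewrite ffunE -mem_enum mem_nth // -cardE hS.
  + move=> hy; rewrite -mem_enum in hy.
    have hi : (index y (enum S) < k)%N by rewrite -hS cardE index_mem.
    exists (Ordinal hi).
    by rewrite ffunE /= nth_index.
Qed.

Lemma mkperm (f : {ffun 'I_k -> 'I_n}) (g : 'I_k -> 'I_n) :
  injective f -> injective g -> (forall p, g p \in codom f) ->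
  exists π : 'S_k, forall p, f (π p) = g p.
Proof.
move=> fi gi gc.
pose h p := odflt p [pick q | f q == g p].
have fh p : f (h p) = g p.
  rewrite /h; case: pickP => [q /eqP //|].
  by move/codomP: (gc p) => [q ->] /(_ q); rewrite eqxx.
have hi : injective h by move=> p1 p2 e; apply: gi; rewrite -!fh e.
by exists (perm hi) => p; rewrite permE fh.
Qed.

End Comb.
Section Compl.
Variables (k n : nat).

Lemma card_compl (a : {ffun 'I_k -> 'I_n}) : incr a ->
  #|[set j : 'I_n | j \notin codom a]| = (n - k)%N.
Proof.
move=> ha.
have -> : #|[set j : 'I_n | j \notin codom a]| = #|[predC codom a]|.
  by apply: eq_card => j; rewrite !inE.
have h1 := cardC (mem (codom a)).
have h2 : #|mem (codom a)| = k by rewrite (card_codom (incr_inj ha)) card_ord.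
rewrite card_ord h2 in h1.
have kn : (k <= n)%N by rewrite -h1 leq_addr.
by apply/eqP; rewrite -(eqn_add2l k) h1 subnKC.
Qed.

Lemma compl_notin (a : {ffun 'I_k -> 'I_n}) (p : 'I_(n - k)) : incr a ->
  compl_map a p \notin codom a.
Proof.
move=> ha; rewrite /compl_map.
have : nth (widen_ord (leq_subr k n) p) (enum [set j : 'I_n | j \notin codom a]) p
   \in enum [set j : 'I_n | j \notin codom a].
  by apply: mem_nth; rewrite -cardE card_compl.
by rewrite mem_enum inE.
Qed.

Lemma compl_surj (a : {ffun 'I_k -> 'I_n}) (j : 'I_n) : incr a ->
  j \notin codom a -> exists p, compl_map a p = j.
Proof.
move=> ha hj.
have hj' : j \in enum [set j : 'I_n | j \notin codom a] by rewrite mem_enum inE.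
have hi : (index j (enum [set j : 'I_n | j \notin codom a]) < n - k)%N.
  by rewrite -(card_compl ha) cardE index_mem.
by exists (Ordinal hi); rewrite /compl_map /= nth_index.
Qed.

Lemma pick_none (a : {ffun 'I_k -> 'I_n}) (i : 'I_n) :
  (forall p, (a p == i) = false) -> i \notin codom a.
Proof.
by move=> h; apply/codomP => [[p hp]]; have := h p; rewrite hp eqxx.
Qed.

Lemma pick_inj (a : {ffun 'I_k -> 'I_n}) (p : 'I_k) : injective a ->
  [pick q | a q == a p] = Some p.
Proof.
move=> ha; case: pickP => [q /eqP /ha -> //|/(_ p)]; by rewrite eqxx.
Qed.

Lemma Zentry (R : comNzRingType) (a b : {ffun 'I_k -> 'I_n}) (X : 'I_k -> 'M[R]_n)
   (s : 'S_k) (A : 'M[R]_n) (i j : 'I_n) : incr a -> incr b ->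
 dsum_ab a b (submx_in (Xsig X s b) a b) (submx_out A a b) i j =
 match [pick p | a p == i], [pick q | b q == j] with
 | Some p, Some q => X (s q) i j
 | None, None => A i j
 | _, _ => 0 end.
Proof.
move=> ha hb; rewrite /dsum_ab mxE.
case: pickP => [p /eqP hp|hp]; case: pickP => [q /eqP hq|hq] //.
- by rewrite !mxE pick_inj ?hp ?hq //; apply: incr_inj.
- case: pickP => [p' /eqP hp'|hp'].
  + case: pickP => [q' /eqP hq'|hq']; first by rewrite mxE hp' hq'.
    have [q' hq''] := compl_surj hb (pick_none hq).
    by have := hq' q'; rewrite hq'' eqxx.
  + have [p' hp''] := compl_surj ha (pick_none hp).
    by have := hp' p'; rewrite hp'' eqxx.
Qed.

End Compl.
Lemma sum_option (R : nmodType) (J : finType) (F : option J -> R) :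
  \sum_(o : option J) F o = F None + \sum_(j : J) F (Some j).
Proof.
rewrite /index_enum !unlock /=; congr (_ + _).
rewrite Finite.enum.unlock.
by elim: (isFinite.enum_subdef _) => //= x s ->.
Qed.
Section Poly.
Variables (R : comNzRingType) (k : nat).

Lemma meval_zero (p : {mpoly R[k]}) : p.@[fun _ => 0] = p@_0.
Proof.
rewrite mevalE [in RHS](mpolyE p) raddf_sum /=; apply: eq_bigr => m _.
rewrite mcoeffZ mcoeffX; congr (_ * _).
case: (eqVneq m 0%MM) => [->|nz].
  by apply: big1 => i _; rewrite mnm0E expr0.
have [i hi] : exists i, m i != 0%N.
  apply/existsP; apply: contraR nz; rewrite negb_exists => /forallP h.
  by apply/eqP/mnmP => i; rewrite mnm0E; apply/eqP; rewrite -[_ == _]negbK h.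
by rewrite (bigD1 i) //= expr0n (negbTE hi) mul0r.
Qed.

Lemma coef_foldr (Q : {mpoly R[k]}) (s : seq 'I_k) (m : 'X_{1..k}) :
  uniq s -> (forall i, i \in s -> m i = 0%N) ->
  (foldr (fun p q => mderiv p q) Q s)@_m =
     Q@_(m + \big[+%MM/0%MM]_(i <- s) U_(i))%MM.
Proof.
elim: s m => [|x s IH] m /=; first by rewrite big_nil addm0.
move=> /andP [xs us] hm.
rewrite mcoeff_mderiv hm ?mem_head // IH //; last first.
  move=> i hi; rewrite mnmDE mnm1E hm ?in_cons ?hi ?orbT //.
  by case: eqP hi xs => // -> ->.
by rewrite big_cons addmA.
Qed.

Lemma prod_scaleX (I : finType) (c : I -> R) (m : I -> 'X_{1..k}) :
  \prod_i (c i *: 'X_[m i]) = (\prod_i c i) *: ('X_[\big[+%MM/0%MM]_i m i] : {mpoly R[k]}).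
Proof.
apply: (big_rec3 (fun (x : {mpoly R[k]}) y z => x = y *: 'X_[z])).
  by rewrite mpolyX0 scale1r.
move=> i x y z _ ->.
by rewrite mpolyXD -scalerAl -scalerAr scalerA.
Qed.

End Poly.
Definition mf k n (f : {ffun 'I_n -> option 'I_k}) : 'X_{1..k} :=
  \big[+%MM/0%MM]_(i < n) (if f i is Some p then U_(p) else 0)%MM.
Definition fr k n (r : {ffun 'I_k -> 'I_n}) : {ffun 'I_n -> option 'I_k} :=
  [ffun i => [pick p | r p == i]].
Definition ones k : 'X_{1..k} := (\big[+%MM/0%MM]_(i <- enum 'I_k) U_(i))%MM.

Section Bij.
Variables (k n : nat).

Lemma ones1 (p : 'I_k) : ones k p = 1%N.
Proof.
rewrite /ones mnm_sumE big_enum /= (bigD1 p) //= mnm1E eqxx big1 //.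
by move=> j /negbTE ne; rewrite mnm1E ne.
Qed.

Lemma mf_val (f : {ffun 'I_n -> option 'I_k}) p :
  mf f p = #|[pred i | f i == Some p]|.
Proof.
rewrite /mf mnm_sumE -sum1_card [RHS]big_mkcond /=.
apply: eq_bigr => i _; rewrite inE; case: (f i) => [q|] //=; rewrite ?mnm0E ?mnm1E //.
Qed.

Lemma mf_ones (f : {ffun 'I_n -> option 'I_k}) :
  (mf f == ones k) = [forall p, #|[pred i | f i == Some p]| == 1%N].
Proof.
apply/eqP/forallP => [e p|h].
  by have := congr1 (fun m : 'X_{1..k} => m p) e; rewrite /= mf_val ones1 => ->.
by apply/mnmP => p; rewrite mf_val ones1; apply/eqP.
Qed.

Lemma frE (r : {ffun 'I_k -> 'I_n}) i p : injective r ->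
  (fr r i == Some p) = (r p == i).
Proof.
move=> ri; rewrite ffunE; case: (eqVneq (r p) i) => [<-|ne].
  by rewrite pick_inj ?eqxx.
case: pickP => [q /eqP hq|//].
by apply/eqP => [[e]]; rewrite -e hq eqxx in ne.
Qed.

Lemma fr_image (x0 : 'I_n) (f : {ffun 'I_n -> option 'I_k}) :
  (f \in (@fr k n) @: [set r : {ffun 'I_k -> 'I_n} | injectiveb r]) = (mf f == ones k).
Proof.
rewrite mf_ones; apply/imsetP/forallP => [[r] |h].
  rewrite inE => /injectiveP ri -> p.
  by apply/eqP/(eq_card1 (x := r p)) => i; rewrite inE /= frE // eq_sym.
have h' p : exists x, [pred i | f i == Some p] =i pred1 x by apply/card1P/h.
pose r := [ffun p => odflt x0 [pick i | f i == Some p]].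
have fr_ p : f (r p) = Some p.
  rewrite /r ffunE; case: pickP => [i /eqP //|].
  by have [x hx] := h' p => /(_ x); have := hx x; rewrite !inE eqxx => ->.
have ri : injective r by move=> p1 p2 e; have := fr_ p1; rewrite e fr_ => -[].
exists r; first by rewrite inE; apply/injectiveP.
apply/ffunP => i; rewrite ffunE.
case e: (f i) => [p|].
  have [x hx] := h' p.
  have h1 : r p \in pred1 x by rewrite -hx inE /= fr_.
  have h2 : i \in pred1 x by rewrite -hx inE /= e.
  by rewrite inE in h1 h2; rewrite (eqP h2) -(eqP h1) pick_inj.
case: pickP => [p /eqP hp|//].
by rewrite -hp fr_ in e.
Qed.

Lemma fr_inj : {in [set r : {ffun 'I_k -> 'I_n} | injectiveb r] &, injective (@fr k n)}.
Proof.
move=> r1 r2; rewrite !inE => /injectiveP i1 /injectiveP i2 e.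
apply/ffunP => p; apply/eqP.
by rewrite -(frE (r2 p) p i1) e (frE _ _ i2).
Qed.

End Bij.
Definition compf k n (a : {ffun 'I_k -> 'I_n}) (s : 'S_k) : {ffun 'I_k -> 'I_n} :=
  [ffun p => a (s p)].

Section Decomp.
Variables (k n : nat) (x0 : 'I_n).

Lemma codom_compf (a : {ffun 'I_k -> 'I_n}) s : codom (compf a s) =i codom a.
Proof.
move=> y; apply/codomP/codomP => [[p ->]|[q ->]].
  by exists (s p); rewrite ffunE.
by exists (s^-1 q)%g; rewrite ffunE permKV.
Qed.

Lemma sum_inj_decomp (R : nmodType) (G : {ffun 'I_k -> 'I_n} -> R) :
  \sum_(r : {ffun 'I_k -> 'I_n} | injectiveb r) G r =
  \sum_(a : {ffun 'I_k -> 'I_n} | incr a) \sum_(s : 'S_k) G (compf a s).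
Proof.
rewrite pair_big_dep /=.
pose h (x : {ffun 'I_k -> 'I_n} * 'S_k) := compf x.1 x.2.
pose A := [set x : {ffun 'I_k -> 'I_n} * 'S_k | incr x.1].
rewrite (eq_bigl (mem A)); last by move=> x; rewrite !inE andbT.
have hinj : {in A &, injective h}.
  move=> [a s] [b t]; rewrite !inE /= /h => ha hb e.
  have eab : a = b.
    apply: (incr_uniq ha hb) => y.
    by rewrite -(codom_compf a s) -(codom_compf b t) e.
  subst b; congr (_, _); apply/permP => p.
  have := congr1 (fun f : {ffun 'I_k -> 'I_n} => f p) e; rewrite /= !ffunE.
  by move/(incr_inj ha).
rewrite -(big_imset _ hinj) /=.
apply: eq_bigl => r; apply/idP/imsetP.
  move/injectiveP => ri.
  have hS : #|[set y | y \in codom r]| = k by rewrite cardsE (card_codom ri) card_ord.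
  have [a ha ca] := incr_exists x0 hS.
  have [s hs] : exists s : 'S_k, forall p, a (s p) = r p.
    by apply: mkperm (incr_inj ha) ri _ => p; rewrite ca inE codom_f.
  exists (a, s); first by rewrite inE.
  by apply/ffunP => p; rewrite /h ffunE hs.
move=> [[a s]]; rewrite inE /= /h => ha ->.
apply/injectiveP => p q; rewrite !ffunE => /(incr_inj ha); exact: perm_inj.
Qed.

End Decomp.
Section Key.
Variables (R : comNzRingType) (k n : nat) (A : 'M[R]_n) (X : 'I_k -> 'M[R]_n).

Definition Hf (s : 'S_n) (f : {ffun 'I_n -> option 'I_k}) : R :=
  \prod_(i < n) (if f i is Some p then X p i (s i) else A i (s i)).

Definition Zm (s : 'S_k) (a b : {ffun 'I_k -> 'I_n}) :=
  dsum_ab a b (submx_in (Xsig X s b) a b) (submx_out A a b).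

Lemma pick_notin (a : {ffun 'I_k -> 'I_n}) (i : 'I_n) :
  i \notin codom a -> [pick p | a p == i] = None.
Proof.
move=> h; case: pickP => [p /eqP hp|//].
by rewrite -hp codom_f in h.
Qed.

Lemma key (x0 : 'I_n) (s : 'S_n) (a : {ffun 'I_k -> 'I_n}) : incr a ->
  \sum_(t : 'S_k) \sum_(b : {ffun 'I_k -> 'I_n} | incr b) \prod_(i < n) Zm t a b i (s i)
  = \sum_(π : 'S_k) Hf s (fr (compf a π)).
Proof.
move=> ha.
pose S := [set s y | y in mem (codom a)].
have hS : #|S| = k by rewrite card_imset ?(card_codom (incr_inj ha)) ?card_ord //; apply: perm_inj.
have inS i : (s i \in S) = (i \in codom a).
  by rewrite mem_imset //; apply: perm_inj.
have [b0 hb0 cb0] := incr_exists x0 hS.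
have zero t b : incr b -> b != b0 -> \prod_(i < n) Zm t a b i (s i) = 0.
  move=> hb nb.
  have [/existsP [i hi]|/existsP ne] := boolP [exists i, (i \in codom a) != (s i \in codom b)].
    rewrite (bigD1 i) //= /Zm Zentry //.
    case: pickP => [p /eqP hp|hp]; case: pickP => [q /eqP hq|hq] /=; rewrite ?mul0r //.
    - by rewrite -hq -hp !codom_f in hi.
    - by rewrite (negbTE (pick_none hp)) (negbTE (pick_none hq)) in hi.
  case/eqP: nb; apply: (incr_uniq hb hb0) => y.
  rewrite cb0 -{2}(permKV s y) inS.
  apply/eqP; apply: (contra_notT _ ne) => hne; exists (s^-1 y)%g.
  by rewrite permKV eq_sym.
rewrite (eq_bigr (fun t => \prod_(i < n) Zm t a b0 i (s i))); last first.
  move=> t _; rewrite (bigD1 b0) //= [X in _ + X]big1 ?addr0 // => b /andP [hb nb].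
  exact: zero.
have [ρ hρ] : exists ρ : 'S_k, forall q, b0 (ρ q) = s (a q).
  apply: mkperm (incr_inj hb0) _ _.
    by move=> p q /perm_inj /(incr_inj ha).
  by move=> q; rewrite cb0 inS codom_f.
have hinj : injective (fun t : 'S_k => (ρ * t)^-1)%g.
  by move=> t1 t2 /invg_inj /mulgI.
rewrite [RHS](reindex_inj hinj) /=.
apply: eq_bigr => t _; rewrite /Hf; apply: eq_bigr => i _.
have ci : injective (compf a (ρ * t)^-1)%g.
  by move=> p q; rewrite !ffunE => /(incr_inj ha) /perm_inj.
rewrite /Zm Zentry //.
case: pickP => [p /eqP hp|hp].
  have -> : [pick q | b0 q == s i] = Some (ρ p).
    by rewrite -hp -hρ pick_inj //; apply: incr_inj.
  have -> : fr (compf a (ρ * t)^-1)%g i = Some (t (ρ p)).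
    by apply/eqP; rewrite frE // ffunE -(permM ρ t p) permK hp.
  by [].
have hn : i \notin codom a := pick_none hp.
rewrite pick_notin; last by rewrite cb0 inS.
rewrite ffunE pick_notin //; apply/codomP => -[q hq].
by rewrite hq ffunE codom_f in hn.
Qed.
End Key.
Lemma prod_expand (R : comNzRingType) (k n : nat) (a : 'I_n -> R) (x : 'I_n -> 'I_k -> R) :
  \prod_(i < n) ((a i)%:MP + \sum_(p < k) 'X_p * (x i p)%:MP) =
  \sum_(f : {ffun 'I_n -> option 'I_k})
     (\prod_(i < n) (if f i is Some p then x i p else a i)) *: ('X_[mf f] : {mpoly R[k]}).
Proof.
have e i : (a i)%:MP + \sum_(p < k) 'X_p * (x i p)%:MP =
   \sum_(o : option 'I_k) ((if o is Some p then x i p else a i) *: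
        ('X_[if o is Some p then U_(p) else 0%MM] : {mpoly R[k]})).
  rewrite sum_option /= mpolyX0 -mul_mpolyC mulr1; congr (_ + _).
  by apply: eq_bigr => p _; rewrite mulrC mul_mpolyC.
rewrite (eq_bigr _ (fun i _ => e i)) bigA_distr_bigA /=; apply: (@eq_bigr _ _ _ _ _ _ _ _) => f _.
by rewrite prod_scaleX.
Qed.

Section Main.
Variables (R : comNzRingType) (k n : nat) (A : 'M[R]_n) (X : 'I_k -> 'M[R]_n) (x0 : 'I_n).

Lemma Dk_formula (c : 'S_n -> R) : Dk_dchi c A X =
  \sum_(s : 'S_n) c s * \sum_(r : {ffun 'I_k -> 'I_n} | injectiveb r) Hf A X s (fr r).
Proof.
rewrite /Dk_dchi meval_zero coef_foldr ?enum_uniq //; last by move=> i _; rewrite mnm0E.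
rewrite add0m /gmf_chi raddf_sum /=; apply: eq_bigr => s _.
rewrite mcoeffCM; congr (_ * _).
rewrite (eq_bigr (fun i => (A i (s i))%:MP + \sum_(p < k) 'X_p * (X p i (s i))%:MP)); last first.
  by move=> i _; rewrite mxE.
rewrite prod_expand raddf_sum /=.
rewrite (eq_bigr (fun f => Hf A X s f * (mf f == ones k)%:R)); last first.
  by move=> f _; rewrite mcoeffZ mcoeffX.
transitivity (\sum_(f | mf f == ones k) Hf A X s f).
  by rewrite [RHS]big_mkcond; apply: eq_bigr => f _; case: eqP; rewrite ?mulr1 ?mulr0.
rewrite (eq_bigl (fun f => f \in (@fr k n) @: [set r : {ffun 'I_k -> 'I_n} | injectiveb r])); last first.
  by move=> f; rewrite /= (fr_image x0).
rewrite big_imset /=; last exact: fr_inj.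
by apply: eq_bigl => r; rewrite inE.
Qed.

Lemma main1 (c : 'S_n -> R) : Dk_dchi c A X =
  \sum_(t : 'S_k) \sum_(a : {ffun 'I_k -> 'I_n} | incr a)
     \sum_(b : {ffun 'I_k -> 'I_n} | incr b) gmf_chi c (Zm A X t a b).
Proof.
rewrite Dk_formula.
transitivity (\sum_(s : 'S_n) c s * \sum_(a : {ffun 'I_k -> 'I_n} | incr a) \sum_(t : 'S_k)
   \sum_(b : {ffun 'I_k -> 'I_n} | incr b) \prod_(i < n) Zm A X t a b i (s i)).
  apply: eq_bigr => s _; congr (_ * _); rewrite (sum_inj_decomp x0).
  by apply: eq_bigr => a ha; rewrite (key _ _ x0).
rewrite /gmf_chi; symmetry.
under eq_bigr => t _ do under eq_bigr => a _ do rewrite exchange_big.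
under eq_bigr => t _ do rewrite exchange_big.
rewrite exchange_big.
under eq_bigr => s _ do rewrite exchange_big.
apply: eq_bigr => s _; rewrite big_distrr; apply: eq_bigr => a _.
rewrite big_distrr; apply: eq_bigr => t _; rewrite big_distrr.
by [].
Qed.

End Main.
Theorem mainTheorem6 (L : numClosedFieldType) (phi : {rmorphism algC -> L})
    (n : nat) (i : Iirr [set: 'S_n]%G) (k : nat)
    (hn : (1 <= n)%N) (hk1 : (1 <= k)%N) (hkn : (k <= n)%N)
    (A : 'M[L]_n) (X : 'I_k -> 'M[L]_n) (Y : 'M[L]_n) :
  let c : 'S_n -> L := fun s => phi ('chi[[set: 'S_n]%G]_i s) in
  Dk_dchi c A X =
    \sum_(s : 'S_k) \sum_(a : {ffun 'I_k -> 'I_n} | incr a)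
       \sum_(b : {ffun 'I_k -> 'I_n} | incr b)
         gmf_chi c (dsum_ab a b (submx_in (Xsig X s b) a b) (submx_out A a b))
  /\
  Dk_dchi c A (fun _ : 'I_k => Y) =
    (k`!)%:R * \sum_(a : {ffun 'I_k -> 'I_n} | incr a)
       \sum_(b : {ffun 'I_k -> 'I_n} | incr b)
         gmf_chi c (dsum_ab a b (submx_in Y a b) (submx_out A a b)).
Proof.
move=> c; pose x0 : 'I_n := Ordinal hn.
split; first exact: (main1 A X x0).
rewrite (main1 A _ x0) /Zm.
have E t a b : submx_in (Xsig (fun _ : 'I_k => Y) t b) a b = submx_in Y a b.
  apply/matrixP => p q; rewrite !mxE.
  by case: pickP => [q' _ //|/(_ q)]; rewrite eqxx.
under eq_bigr => t _ do under eq_bigr => a _ do under eq_bigr => b _ do rewrite E.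
by rewrite sumr_const mulr_natl; congr (_ *+ _); exact: card_Sn.
Qed.
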